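(* Let $p$ be a prime, $n\in\mathbb{N}^*$ and $\sigma$ a $p$-uniform morphism on $\mathcal A_m$. Then $$\begin{pmatrix}P_{\sigma^n(0)}(T)\\ \vdots\\ P_{\sigma^n(m-1)}(T)\end{pmatrix}=M_\sigma(T^{p^{n-1}})M_\sigma(T^{p^{n-2}})\cdots M_\sigma(T)\begin{pmatrix}0\\1\\ \vdots\\ m-1\end{pmatrix}.$$
   Context: $\mathcal A_m=\{0,\dots,m-1\}$, letters viewed in $\mathbb{F}_p$. For $W=w_0\cdots w_{r-1}$, $P_W(T)=\sum_{j=0}^{r-1}w_{r-1-j}T^j$, and $\beta_{W,j}(T)=\sum_{i:\,w_i=j}T^{r-1-i}\in\mathbb{F}_p[T]$. $M_\sigma(T)=(\beta_{\sigma(i),j}(T))_{0\le i,j\le m-1}$. A $p$-uniform morphism sends each letter to a word of length $p$. *)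

(* Defs.v *)
From HB Require Import structures.
From mathcomp Require Import all_boot all_order all_algebra.
Set Implicit Arguments. Unset Strict Implicit. Unset Printing Implicit Defensive.
Import GRing.Theory.
Local Open Scope ring_scope.

Definition morph_word (m : nat) (sigma : 'I_m -> seq 'I_m) (w : seq 'I_m) : seq 'I_m :=
  flatten (map sigma w).

Definition morph_iter (m : nat) (sigma : 'I_m -> seq 'I_m) (n : nat) (a : 'I_m) : seq 'I_m :=
  iter n (morph_word sigma) [:: a].

Definition PW (R : nzRingType) (m : nat) (W : seq 'I_m) : {poly R} :=
  \sum_(j < size W) ((nth 0%N (map val W) (size W - 1 - j))%:R *: 'X^j).

Definition betaW (R : nzRingType) (m : nat) (W : seq 'I_m) (j : nat) : {poly R} :=
  \sum_(i < size W | nth 0%N (map val W) i == j) 'X^(size W - 1 - i).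

Definition Msig (R : comNzRingType) (m : nat) (sigma : 'I_m -> seq 'I_m)
  (x : {poly R}) : 'M[{poly R}]_m :=
  \matrix_(i < m, j < m) ((betaW R (sigma i) j) \Po x).

Fixpoint Msig_prod (R : comNzRingType) (m : nat) (sigma : 'I_m -> seq 'I_m)
  (p n : nat) : 'M[{poly R}]_m :=
  match n with
  | 0 => 1%:M
  | k.+1 => Msig sigma ('X^(p ^ k)) *m Msig_prod R sigma p k
  end.

(* Main.v *)
Require Import Defs.
From HB Require Import structures.
From mathcomp Require Import all_boot all_order all_algebra.
Import GRing.Theory.
From mathcomp Require Import zify.
Local Open Scope ring_scope.

Section Aux.
Variable R : comNzRingType.
Variable m : nat.

Lemma PW_nil : PW R ([::] : seq 'I_m) = 0.
Proof. by rewrite /PW big_ord0. Qed.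

Lemma PW_cons (c : 'I_m) (W : seq 'I_m) :
  PW R (c :: W) = (val c)%:R *: 'X^(size W) + PW R W.
Proof.
rewrite /PW /= big_ord_recr /= subSS subn0 subnn /= addrC; congr (_ + _).
apply: eq_bigr => j _ /=.
have Hj := ltn_ord j.
by rewrite (_ : (size W - j = (size W - 1 - j).+1)%N) //; lia.
Qed.

Lemma PW_cat (U V : seq 'I_m) :
  PW R (U ++ V) = PW R U * 'X^(size V) + PW R V.
Proof.
elim: U => [|c U IH] /=; first by rewrite PW_nil mul0r add0r.
rewrite !PW_cons IH size_cat addrA mulrDl -scalerAl -exprD addnC.
by [].
Qed.

Lemma betaW_nil j : betaW R ([::] : seq 'I_m) j = 0.
Proof. by rewrite /betaW big_ord0. Qed.

Lemma betaW_cons (c : 'I_m) (W : seq 'I_m) j :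
  betaW R (c :: W) j = (if val c == j then 'X^(size W) else 0) + betaW R W j.
Proof.
rewrite /betaW /= big_mkcond big_ord_recl /= subSS !subn0; congr (_ + _).
rewrite [in RHS]big_mkcond; apply: eq_bigr => i _ /=.
by rewrite add0n /bump leq0n add1n -subnDA add1n.
Qed.

Lemma size_flat (f : 'I_m -> seq 'I_m) N s :
  (forall c, size (f c) = N) -> size (flatten (map f s)) = (N * size s)%N.
Proof.
move=> Hf; elim: s => [|c s IH] /=; first by rewrite muln0.
by rewrite size_cat IH Hf mulnS.
Qed.

Lemma PW_flatten (f : 'I_m -> seq 'I_m) N s :
  (forall c, size (f c) = N) ->
  PW R (flatten (map f s)) =
  \sum_(b < m) (betaW R s b \Po 'X^N) * PW R (f b).
Proof.
move=> Hf; elim: s => [|c s IH] /=.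
  by rewrite PW_nil big1 // => b _; rewrite betaW_nil comp_poly0 mul0r.
rewrite PW_cat IH (@size_flat f N s Hf).
under eq_bigr => b _ do rewrite betaW_cons comp_polyD mulrDl.
rewrite big_split /=; congr (_ + _).
rewrite (bigD1 c) //= eqxx big1 ?addr0; last first.
  by move=> b; rewrite val_eqE eq_sym => /negbTE ->; rewrite comp_poly0 mul0r.
by rewrite comp_Xn_poly -exprM mulrC mulnC.
Qed.
End Aux.

Lemma mw_cat m (sigma : 'I_m -> seq 'I_m) s1 s2 :
  morph_word sigma (s1 ++ s2) = morph_word sigma s1 ++ morph_word sigma s2.
Proof. by rewrite /morph_word map_cat flatten_cat. Qed.

Lemma iter_mw m (sigma : 'I_m -> seq 'I_m) n w :
  iter n (morph_word sigma) w = flatten (map (morph_iter sigma n) w).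
Proof.
elim: n w => [|n IH] w /=.
  by elim: w => [|c w IHw] //=; rewrite -IHw.
rewrite IH; elim: w => [|c w IHw] //=.
by rewrite mw_cat IHw.
Qed.

Lemma morph_iterS m (sigma : 'I_m -> seq 'I_m) n a :
  morph_iter sigma n.+1 a = flatten (map (morph_iter sigma n) (sigma a)).
Proof.
by rewrite /morph_iter iterSr -/(morph_iter _ _ _) iter_mw /morph_word /= cats0.
Qed.

Lemma size_morph_iter m (sigma : 'I_m -> seq 'I_m) p n a :
  (forall a : 'I_m, size (sigma a) = p) -> size (morph_iter sigma n a) = (p ^ n)%N.
Proof.
move=> Hs; elim: n a => [|n IH] a; first by [].
by rewrite morph_iterS (@size_flat _ _ (p ^ n)%N) // Hs expnS mulnC.
Qed.

Lemma main_gen (R : comNzRingType) p m n (sigma : 'I_m -> seq 'I_m) :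
  (forall a : 'I_m, size (sigma a) = p) ->
  (\col_(a < m) PW R (morph_iter sigma n a) : 'cV[{poly R}]_m)
  = Msig_prod R sigma p n *m \col_(j < m) ((j : nat)%:R : {poly R}).
Proof.
move=> Hs; elim: n => [|n IH].
  rewrite /= mul1mx; apply/matrixP => i j; rewrite !mxE.
  by rewrite /morph_iter /= PW_cons PW_nil addr0 expr0 scaler_nat.
rewrite /= -mulmxA -IH; apply/matrixP => i j; rewrite !mxE.
rewrite -[morph_word _ _]/(morph_iter sigma n.+1 i) morph_iterS (@PW_flatten R m (morph_iter sigma n) (p ^ n)%N); last first.
  by move=> c; apply: size_morph_iter.
by apply: eq_bigr => b _; rewrite !mxE.
Qed.

Theorem corollary4p11 (p : nat) (m : nat) (n : nat)
  (sigma : 'I_m -> seq 'I_m) :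
  prime p -> (0 < n)%N ->
  (forall a : 'I_m, size (sigma a) = p) ->
  (\col_(a < m) PW 'F_p (morph_iter sigma n a) : 'cV[{poly 'F_p}]_m)
  = Msig_prod 'F_p sigma p n *m \col_(j < m) ((j : nat)%:R : {poly 'F_p}).
Proof.
by move=> _ _ Hs; apply: main_gen.
Qed.
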